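(* Suppose that $A$ is $\nu$-strongly monotone for some $\nu>0$ and let $\bar x$ be the unique element of $\operatorname{zer}(A+B)$ (assumed nonempty). Let the step sizes be $\gamma_n=\frac1{2\nu(n+1)}$ for $n\in\mathbb N$, and let $(x_n)$ be generated by the reflected stochastic forward–backward iteration with these step sizes. Suppose there is a constant $c$ such that $\mathsf E[\|r_n-By_n\|^2\mid\mathcal F_n]\le c$ for all $n\in\mathbb N$. Then $$\mathsf E\big[\|x_n-\bar x\|^2\big]=\mathcal O\big(\log(n+1)/(n+1)\big)\quad (n>n_0),$$ where $n_0$ is the smallest integer such that $n_0>4\nu^{-1}\mu(1+\sqrt2)$.
   Context: $\mathcal H$ is a separable real Hilbert space; $(\Omega,\mathcal F,\mathsf P)$ a probability space. $A:\mathcal H\to2^{\mathcal H}$ is maximally monotone; $B:\mathcal H\to\mathcal H$ is monotone and $\mu$-Lipschitz continuous ($\mu>0$). $A$ is $\nu$-strongly monotone if $\langle x-y,u-v\rangle\ge\nu\|x-y\|^2$ for all $(x,u),(y,v)\in\operatorname{gra}A$. $J_{\gamma A}=(\mathrm{Id}+\gamma A)^{-1}$. Reflected stochastic forward–backward iteration: $x_0,x_{-1}$ are square-integrable $\mathcal H$-valued random variables, and for every $n\in\mathbb N$: $y_n=2x_n-x_{n-1}$; $r_n$ is an $\mathcal H$-valued random variable with $\mathsf E[r_n\mid\mathcal F_n]=By_n$, where $\mathcal F_n=\sigma(x_0,\dots,x_n)$; and $x_{n+1}=J_{\gamma_nA}(x_n-\gamma_nr_n)$. *)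

(* Defs.v *)
From HB Require Import structures.
From mathcomp Require Import all_boot all_order all_algebra.
From mathcomp Require Import all_classical all_reals all_analysis.
Set Implicit Arguments. Unset Strict Implicit. Unset Printing Implicit Defensive.
Import Order.TTheory GRing.Theory Num.Theory.
Import numFieldNormedType.Exports.
Local Open Scope classical_set_scope.
Local Open Scope ring_scope.

Section Defs.
Context {R : realType} {H : normedModType R}.

Definition is_inner_product (ip : H -> H -> R) : Prop :=
  [/\ (forall x y, ip x y = ip y x),
      (forall (a : R) x y z, ip (a *: x + y) z = a * ip x z + ip y z)
    & (forall x, ip x x = `|x| ^+ 2)].

Definition separable_space : Prop :=
  exists D : set H, countable D /\ dense D.

(* set-valued operators A : H -> 2^H; u \in A x is written A x u *)
Definition monotone_op (ip : H -> H -> R) (A : H -> set H) : Prop :=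
  forall x y u v, A x u -> A y v -> 0 <= ip (x - y) (u - v).

Definition maximally_monotone (ip : H -> H -> R) (A : H -> set H) : Prop :=
  monotone_op ip A /\
  forall A' : H -> set H, monotone_op ip A' ->
    (forall x u, A x u -> A' x u) -> forall x u, A' x u -> A x u.

Definition strongly_monotone (ip : H -> H -> R) (A : H -> set H) (nu : R) :
  Prop := forall x y u v, A x u -> A y v -> nu * `|x - y| ^+ 2 <= ip (x - y) (u - v).

Definition monotone_fun (ip : H -> H -> R) (B : H -> H) : Prop :=
  forall x y, 0 <= ip (x - y) (B x - B y).

Definition lipschitz_with (B : H -> H) (mu : R) : Prop :=
  forall x y, `|B x - B y| <= mu * `|x - y|.

(* p = J_{g A} z, i.e. z \in p + g A p *)
Definition resolvent_rel (A : H -> set H) (g : R) (z p : H) : Prop :=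
  exists u, A p u /\ z = p + g *: u.

Definition borelH : set (set H) := <<s [set U : set H | open U] >>.

Context {d : measure_display} {T : measurableType d}.

Definition measurable_wrt (F : set (set T)) (X : T -> H) : Prop :=
  forall Bs, borelH Bs -> F (X @^-1` Bs).

Definition random_var (X : T -> H) : Prop := measurable_wrt measurable X.

Definition filtration (x : nat -> T -> H) (n : nat) : set (set T) :=
  <<s [set E | exists k Bs, (k <= n)%N /\ borelH Bs /\ E = x k @^-1` Bs] >>.

Definition square_integrable (P : probability T R) (X : T -> H) : Prop :=
  random_var X /\ (\int[P]_w ((`|X w| ^+ 2)%:E) < +oo)%E.

(* E[r | F] = g for H-valued r (weak/Pettis form, equivalent to Bochner
   conditional expectation in a separable Hilbert space) *)
Definition cond_exp_eq (ip : H -> H -> R) (P : probability T R)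
    (F : set (set T)) (r g : T -> H) : Prop :=
  [/\ random_var r, (\int[P]_w ((`|r w|)%:E) < +oo)%E,
      measurable_wrt F g, (\int[P]_w ((`|g w|)%:E) < +oo)%E &
      forall (h : H) (E : set T), F E ->
        (\int[P]_(w in E) ((ip (r w) h)%:E) = \int[P]_(w in E) ((ip (g w) h)%:E))%E].

(* E[f | F] <= c a.s., for f >= 0 *)
Definition cond_exp_le (P : probability T R) (F : set (set T)) (f : T -> R)
    (c : R) : Prop :=
  forall E : set T, F E -> (\int[P]_(w in E) ((f w)%:E) <= c%:E * P E)%E.

Definition refl_point (x : nat -> T -> H) (xm1 : T -> H) (n : nat) (w : T) : H :=
  2 *: x n w - (if n is k.+1 then x k w else xm1 w).

End Defs.

Definition step_size {R : realType} (nu : R) (n : nat) : R :=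
  (2 * nu * n.+1%:R)^-1.

(* Main.v *)
Require Import Defs.
From HB Require Import structures.
From mathcomp Require Import all_boot all_order all_algebra.
From mathcomp Require Import all_classical all_reals all_analysis.
Import Order.TTheory GRing.Theory Num.Theory.
Import numFieldNormedType.Exports.
Local Open Scope classical_set_scope.
Local Open Scope ring_scope.

From mathcomp Require Import ring lra.
Set Implicit Arguments. Unset Strict Implicit. Unset Printing Implicit Defensive.
Section Hilb.
Context {R : realType} {H : normedModType R} (ip : H -> H -> R).
Hypothesis hip : is_inner_product ip.
Implicit Types x y z : H.

Lemma ipC x y : ip x y = ip y x. Proof. by case: hip. Qed.
Lemma ipxx x : ip x x = `|x| ^+ 2. Proof. by case: hip. Qed.
Lemma ipDZl a x y z : ip (a *: x + y) z = a * ip x z + ip y z. Proof. by case: hip. Qed.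
Lemma ip0l z : ip 0 z = 0.
Proof. have := ipDZl 1 0 0 z; rewrite scaler0 addr0 mul1r => h; lra. Qed.
Lemma ipDl x y z : ip (x + y) z = ip x z + ip y z.
Proof. by rewrite -[x in LHS]scale1r ipDZl mul1r. Qed.
Lemma ipZl a x z : ip (a *: x) z = a * ip x z.
Proof. by rewrite -[_ *: x]addr0 ipDZl ip0l addr0. Qed.
Lemma ipNl x z : ip (- x) z = - ip x z.
Proof. by rewrite -scaleN1r ipZl mulN1r. Qed.
Lemma ipBl x y z : ip (x - y) z = ip x z - ip y z.
Proof. by rewrite ipDl ipNl. Qed.
Lemma ipDr x y z : ip z (x + y) = ip z x + ip z y.
Proof. by rewrite ipC ipDl !(ipC _ z). Qed.
Lemma ipZr a x z : ip z (a *: x) = a * ip z x.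
Proof. by rewrite ipC ipZl ipC. Qed.
Lemma ipNr x z : ip z (- x) = - ip z x.
Proof. by rewrite ipC ipNl ipC. Qed.
Lemma ipBr x y z : ip z (x - y) = ip z x - ip z y.
Proof. by rewrite ipDr ipNr. Qed.
Lemma ip0r z : ip z 0 = 0. Proof. by rewrite ipC ip0l. Qed.

Lemma sqnD x y : `|x + y| ^+ 2 = `|x| ^+ 2 + 2 * ip x y + `|y| ^+ 2.
Proof. rewrite -!ipxx ipDl !ipDr (ipC y x); ring. Qed.
Lemma sqnB x y : `|x - y| ^+ 2 = `|x| ^+ 2 - 2 * ip x y + `|y| ^+ 2.
Proof. by rewrite sqnD normrN ipNr; ring. Qed.

Lemma young x y t : 0 < t -> 2 * ip x y <= t * `|x| ^+ 2 + `|y| ^+ 2 / t.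
Proof.
move=> t0; have := sqnB (t *: x) y; rewrite ipZl normrZ (gtr0_norm t0).
move=> e; have : 0 <= `|t *: x - y| ^+ 2 by rewrite sqr_ge0.
rewrite e => h.
have h2 : 2 * t * ip x y <= t ^+ 2 * `|x| ^+ 2 + `|y| ^+ 2 by rewrite exprMn in h; lra.
rewrite -(ler_pM2l t0).
have -> : t * (t * `|x| ^+ 2 + `|y| ^+ 2 / t) = t ^+ 2 * `|x| ^+ 2 + `|y| ^+ 2.
  by field; rewrite gt_eqF.
lra.
Qed.

Lemma cs x y : `|ip x y| <= `|x| * `|y|.
Proof.
have [->|x0] := eqVneq x 0; first by rewrite ip0l normr0 normr0 mul0r.
have [->|y0] := eqVneq y 0; first by rewrite ip0r !normr0 mulr0.
have nx : 0 < `|x| by rewrite normr_gt0.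
have ny : 0 < `|y| by rewrite normr_gt0.
have t0 : 0 < `|y| / `|x| by rewrite divr_gt0.
have e : `|y| / `|x| * `|x| ^+ 2 + `|y| ^+ 2 / (`|y| / `|x|) = 2 * (`|x| * `|y|).
  by field; rewrite ?gt_eqF.
rewrite ler_norml; apply/andP; split.
- have := young (- x) y t0; rewrite ipNl normrN e; lra.
- have := young x y t0; rewrite e; lra.
Qed.

Lemma sqn_le2 x y : `|x + y| ^+ 2 <= 2 * `|x| ^+ 2 + 2 * `|y| ^+ 2.
Proof. have := young x y ltr01; rewrite sqnD divr1 mul1r; lra. Qed.

End Hilb.

Section Meas.
Context {R : realType} {H : normedModType R} {d : measure_display} {T : measurableType d}.

Lemma wrt_open (F : set (set T)) (f : T -> H) : sigma_algebra setT F ->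
  (forall U, open U -> F (f @^-1` U)) -> @measurable_wrt R H d T F f.
Proof.
move=> sF hU Bs hB.
have : @borelH R H `<=` [set B | F (f @^-1` B)].
  apply: smallest_sub; last by move=> U oU; exact: hU.
  case: sF => F0 FC FU; split.
  - by rewrite /= preimage_set0.
  - by move=> A /= FA; rewrite setTD -preimage_setC -setTD; exact: FC.
  - by move=> A /= FA; rewrite preimage_bigcup; exact: FU.
by apply.
Qed.

Lemma rv_open (f : T -> H) : (forall U, open U -> measurable (f @^-1` U)) ->
  @random_var R H d T f.
Proof. move=> h; apply: wrt_open => //; exact: sigma_algebra_measurable. Qed.

Lemma open_borel (U : set H) : open U -> @borelH R H U.
Proof. by move=> oU; apply: sub_sigma_algebra. Qed.

Lemma rv_realfun (f : T -> H) (phi : H -> R) : @random_var R H d T f ->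
  continuous phi -> measurable_fun setT (phi \o f).
Proof.
move=> hf cphi.
apply: (measurability _ (measurable_realfun.RGenOInfty.measurableE R)).
move=> _ [_ [x ->] <-]; rewrite setTI comp_preimage.
apply: hf; apply: open_borel; apply: open_comp; last exact: rray_open.
by move=> v _; exact: cphi.
Qed.


Lemma rv_lip (f g : T -> H) : @random_var R H d T g ->
  (forall w w', `|f w - f w'| <= `|g w - g w'|) -> @random_var R H d T f.
Proof.
move=> hg hfg; apply: rv_open => U oU.
pose S := [set p : T * R | 0 < p.2 /\ ball (f p.1) p.2 `<=` U].
pose V := \bigcup_(p in S) ball (g p.1) p.2.
have oV : open V by apply: bigcup_open => p _; exact: ball_open.
have -> : f @^-1` U = g @^-1` V.
  apply/seteqP; split => w /=.
  - move=> Uw; have := open_subball oU Uw; case/nbhs_ballP => e /= e0 He.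
    have e20 : 0 < e / 2 by rewrite divr_gt0.
    have : ball (f w) (e / 2) `<=` U.
      apply: (He (e / 2)); last by [].
      rewrite -ball_normE /= sub0r normrN gtr0_norm//; lra.
    move=> hb; exists (w, e / 2) => //=; exact: ballxx.
  - case=> -[w0 e] /= [e0 hb] hgw; apply: hb.
    move: hgw; rewrite -!ball_normE /= => h; exact: le_lt_trans (hfg _ _) h.
by apply: hg; exact: open_borel.
Qed.

Lemma enum_dense : @separable_space R H ->
  exists e : nat -> H, forall x (t : R), 0 < t -> exists j, `|x - e j| < t.
Proof.
case=> D [cD dD]; have [f finj] : exists f : H -> nat, {in D &, injective f} by apply/countable_injP.
exists (fun j => xget 0 [set z | D z /\ f z = j]) => x t t0.
have [z [bz Dz]] : ball x t `&` D !=set0.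
  apply: dD; [by exists x; exact: ballxx | exact: ball_open].
exists (f z).
set P := [set y | D y /\ f y = f z].
have hx : P (xget 0 P) by apply: (@xgetPex _ 0 P); exists z.
case: hx => Dz' fz'.
have -> : xget 0 P = z by apply: finj => //; rewrite inE.
by move: bz; rewrite -ball_normE.
Qed.


Lemma open_ball_sub (U : set H) x : open U -> U x ->
  exists2 t : R, 0 < t & forall y, `|x - y| < t -> U y.
Proof.
move=> oU Ux; have := open_subball oU Ux; case/nbhs_ballP => e /= e0 He.
have e20 : 0 < e / 2 by rewrite divr_gt0.
have hb : ball x (e / 2) `<=` U.
  apply: (He (e / 2)); last by [].
  rewrite -ball_normE /= sub0r normrN gtr0_norm//; lra.
by exists (e / 2) => // y hy; apply: hb; rewrite -ball_normE.
Qed.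

Lemma rho_small (t : R) : 0 < t -> exists k : nat, (k.+1%:R)^-1 < t.
Proof.
move=> t0; exists (Num.truncn (t^-1)).
have h := truncnS_gt (t^-1); move: h; set s := t^-1 => h.
rewrite -[t]invrK -/s ltf_pV2 ?posrE ?invr_gt0//.
Qed.

Lemma comb_est (a b : R) (u v u' v' : H) :
  `|(a *: u + b *: v) - (a *: u' + b *: v')| <= `|a| * `|u - u'| + `|b| * `|v - v'|.
Proof.
rewrite opprD addrACA -!scalerBr.
by apply: le_trans (ler_normD _ _) _; rewrite !normrZ.
Qed.

Lemma rv_comb (f g : T -> H) (a b : R) : @separable_space R H ->
  @random_var R H d T f -> @random_var R H d T g ->
  @random_var R H d T (fun w => a *: f w + b *: g w).
Proof.
move=> sH hf hg; have [e he] := enum_dense sH.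
apply: rv_open => U oU.
pose K := `|a| + `|b| + 1.
have K0 : 0 < K by rewrite /K; have := normr_ge0 a; have := normr_ge0 b; lra.
pose rho (k : nat) : R := (k.+1%:R)^-1.
have rho0 k : 0 < rho k by rewrite /rho invr_gt0.
pose C i j k := forall z, `|(a *: e i + b *: e j) - z| < 2 * K * rho k -> U z.
pose S i j k := [set w | C i j k /\ `|e i - f w| < rho k /\ `|e j - g w| < rho k].
have -> : (fun w => a *: f w + b *: g w) @^-1` U =
    \bigcup_i \bigcup_j \bigcup_k S i j k.
  apply/seteqP; split => w /=.
  - move=> Uw; have [t t0 ht] := open_ball_sub oU Uw.
    have t40 : 0 < t / (4 * K) by rewrite divr_gt0// mulr_gt0.
    have [k hk] := rho_small t40.
    have [i hi] := he (f w) _ (rho0 k).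
    have [j hj] := he (g w) _ (rho0 k).
    exists i => //; exists j => //; exists k => //; split; last first.
      by split; rewrite distrC.
    move=> z hz; apply: ht.
    have h1 := comb_est a b (f w) (g w) (e i) (e j).
    have h2 := ler_normD ((a *: f w + b *: g w) - (a *: e i + b *: e j))
                         ((a *: e i + b *: e j) - z).
    rewrite addrA subrK in h2.
    have hk' : rho k * (4 * K) < t by rewrite -ltr_pdivlMr// mulr_gt0.
    have ha := normr_ge0 a; have hb := normr_ge0 b.
    have : `|a| * `|f w - e i| + `|b| * `|g w - e j| <= (`|a| + `|b|) * rho k.
      rewrite mulrDl; apply: lerD; apply: ler_wpM2l => //; exact: ltW.
    rewrite /K in hk' hz; nra.
  - case=> i _ [j _ [k _ [hC [hi hj]]]]; apply: hC.
    apply: le_lt_trans (comb_est _ _ _ _ _ _) _.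
    have ha := normr_ge0 a; have hb := normr_ge0 b; have := rho0 k.
    have : `|a| * `|e i - f w| + `|b| * `|e j - g w| <= (`|a| + `|b|) * rho k.
      rewrite mulrDl; apply: lerD; apply: ler_wpM2l => //; exact: ltW.
    rewrite /K; nra.
apply: bigcupT_measurable => i; apply: bigcupT_measurable => j.
apply: bigcupT_measurable => k.
have [c|c] := pselect (C i j k).
- have -> : S i j k = f @^-1` (ball (e i) (rho k)) `&` g @^-1` (ball (e j) (rho k)).
    by apply/seteqP; split => w /=; rewrite -!ball_normE /=; [case=> _ [] | case=> h1 h2].
  by apply: measurableI; [apply: hf | apply: hg]; apply: open_borel; exact: ball_open.
- have -> : S i j k = set0 by apply/seteqP; split => w //= [].
  exact: measurable0.
Qed.

End Meas.

Section L2.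
Context {R : realType} {H : normedModType R} (ip : H -> H -> R)
  {d : measure_display} {T : measurableType d} (P : probability T R).
Hypotheses (hip : is_inner_product ip) (hsep : @separable_space R H).
Implicit Types (f g : T -> H).

Definition RV (f : T -> H) := @random_var R H d T f.
Definition intg (f : T -> R) := P.-integrable setT (EFin \o f).
Definition L2 (f : T -> H) := RV f /\ intg (fun w => `|f w| ^+ 2).

Lemma rv_cst (h : H) : RV (fun _ => h).
Proof.
move=> Bs _; have [hB|hB] := pselect (Bs h).
- by have -> : (fun _ : T => h) @^-1` Bs = setT by apply/seteqP; split.
- by have -> : (fun _ : T => h) @^-1` Bs = set0 by apply/seteqP; split.
Qed.

Lemma mnorm f : RV f -> measurable_fun setT (fun w => `|f w|).
Proof. move=> hf; exact: (rv_realfun hf (@norm_continuous _ H)). Qed.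

Lemma msq f : RV f -> measurable_fun setT (fun w => `|f w| ^+ 2).
Proof. by move=> hf; apply: measurable_realfun.measurable_funX; exact: mnorm. Qed.

Lemma polar u v : ip u v = (`|u + v| ^+ 2 - `|u - v| ^+ 2) / 4.
Proof. rewrite (sqnD hip) (sqnB hip); field. have : (0:R) < 4 by lra. by move/lt0r_neq0. Qed.

Lemma mip f g : RV f -> RV g -> measurable_fun setT (fun w => ip (f w) (g w)).
Proof.
move=> hf hg.
have e : (fun w => ip (f w) (g w)) =
  (fun w => (`|1 *: f w + 1 *: g w| ^+ 2 - `|1 *: f w + (-1) *: g w| ^+ 2) * 4^-1).
  by apply/funext => w; rewrite polar !scale1r scaleN1r.
rewrite e; apply: measurable_realfun.measurable_funM; last exact: measurable_cst.
by apply: measurable_realfun.measurable_funB; apply: msq; apply: rv_comb.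
Qed.

Lemma int_le (f g : T -> R) : measurable_fun setT f -> (forall w, `|f w| <= g w) -> intg g -> intg f.
Proof.
move=> mf hfg ig; apply: (le_integrable measurableT _ _ ig).
- by apply/measurable_realfun.measurable_EFinP.
- move=> w _ /=; rewrite lee_fin; apply: le_trans (hfg w) _.
  exact: ler_norm.
Qed.

Lemma int_add (f g : T -> R) : intg f -> intg g -> intg (fun w => f w + g w).
Proof.
move=> hf hg; rewrite /intg.
have -> : EFin \o (fun w => f w + g w) = (EFin \o f) \+ (EFin \o g).
  by apply/funext => w.
exact: integrableD.
Qed.

Lemma int_sub (f g : T -> R) : intg f -> intg g -> intg (fun w => f w - g w).
Proof.
move=> hf hg; rewrite /intg.
have -> : EFin \o (fun w => f w - g w) = ((EFin \o f) \- (EFin \o g))%E.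
  by apply/funext => w.
exact: integrableB.
Qed.

Lemma int_scale k (f : T -> R) : intg f -> intg (fun w => k * f w).
Proof.
move=> hf; rewrite /intg.
have -> : EFin \o (fun w => k * f w) = (fun w => (k%:E * (EFin \o f) w)%E).
  by apply/funext => w.
exact: integrableZl.
Qed.

Lemma int_cst k : intg (fun _ => k).
Proof. exact: finite_measure_integrable_cst. Qed.

Lemma L2_comb f g a b : L2 f -> L2 g -> L2 (fun w => a *: f w + b *: g w).
Proof.
move=> [rf jf] [rg jg]; split; first exact: rv_comb.
apply: (@int_le _ (fun w => 2 * a ^+ 2 * `|f w| ^+ 2 + 2 * b ^+ 2 * `|g w| ^+ 2)).
- by apply: msq; exact: rv_comb.
- move=> w; rewrite ger0_norm ?sqr_ge0//.
  apply: le_trans (sqn_le2 hip _ _) _.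
  by rewrite !normrZ !exprMn !real_normK ?num_real// !mulrA.
- by apply: int_add; rewrite -?mulrA; apply: int_scale.
Qed.

Lemma L2_cst h : L2 (fun _ => h).
Proof. split; [exact: rv_cst | exact: int_cst]. Qed.

Lemma L2_dom f g : RV f -> L2 g -> (forall w, `|f w| <= `|g w|) -> L2 f.
Proof.
move=> rf [rg jg] hfg; split => //.
apply: int_le jg; first exact: msq.
move=> w; rewrite ger0_norm ?sqr_ge0//; rewrite lerXn2r ?nnegrE//.
Qed.

Lemma L2_dom2 f g1 g2 : RV f -> L2 g1 -> L2 g2 ->
  (forall w, `|f w| <= `|g1 w| + `|g2 w|) -> L2 f.
Proof.
move=> rf [r1 j1] [r2 j2] hfg; split => //.
apply: (@int_le _ (fun w => 2 * `|g1 w| ^+ 2 + 2 * `|g2 w| ^+ 2)).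
- exact: msq.
- move=> w; rewrite ger0_norm ?sqr_ge0//.
  have h := hfg w; have h0 := normr_ge0 (f w).
  have := normr_ge0 (g1 w); have := normr_ge0 (g2 w).
  have := sqr_ge0 (`|g1 w| - `|g2 w|); rewrite sqrrB. nra.
- by apply: int_add; apply: int_scale.
Qed.

Lemma int_ip f g : L2 f -> L2 g -> intg (fun w => ip (f w) (g w)).
Proof.
move=> [rf jf] [rg jg].
apply: (@int_le _ (fun w => 2^-1 * `|f w| ^+ 2 + 2^-1 * `|g w| ^+ 2)).
- exact: mip.
- move=> w; apply: le_trans (cs hip _ _) _.
  have := sqr_ge0 (`|f w| - `|g w|); rewrite sqrrB; lra.
- by apply: int_add; apply: int_scale.
Qed.

Lemma int_sq f : L2 f -> intg (fun w => `|f w| ^+ 2).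
Proof. by case. Qed.

Lemma int_norm f : L2 f -> intg (fun w => `|f w|).
Proof.
move=> [rf jf].
apply: (@int_le _ (fun w => 2^-1 + 2^-1 * `|f w| ^+ 2)).
- exact: mnorm.
- move=> w; rewrite normr_id.
  have := sqr_ge0 (`|f w| - 1); rewrite sqrrB; lra.
- by apply: int_add; [apply: int_cst | apply: int_scale].
Qed.

End L2.

Section SigmaClosure.
Context {T : Type} (G : set (set T)).
Hypothesis sG : sigma_algebra setT G.

Lemma sG0 : G set0. Proof. by case: sG. Qed.
Lemma sGC A : G A -> G (~` A).
Proof. by case: sG => _ hC _ hA; rewrite -setTD; exact: hC. Qed.
Lemma sGU A B : G A -> G B -> G (A `|` B).
Proof.
move=> hA hB; case: sG => h0 _ hU; rewrite -bigcup2E; apply: hU => -[|[|i]] //=.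
Qed.
Lemma sGI A B : G A -> G B -> G (A `&` B).
Proof.
by move=> hA hB; rewrite -[A `&` B]setCK setCI; apply: sGC; apply: sGU; apply: sGC.
Qed.
Lemma sGbigcup (F : nat -> set T) : (forall i, G (F i)) -> G (\bigcup_i F i).
Proof. by case: sG => _ _ hU; exact: hU. Qed.

End SigmaClosure.

Section Mart.
Context {R : realType} {H : normedModType R} (ip : H -> H -> R)
  {d : measure_display} {T : measurableType d} (P : probability T R).
Hypotheses (hip : is_inner_product ip) (hsep : @separable_space R H).

Lemma Rint_fin (D : set T) (f : T -> R) : measurable D ->
  P.-integrable D (EFin \o f) ->
  (\int[P]_(w in D) (f w)%:E)%E = (Rintegral P D f)%:E.
Proof. by move=> mD hf; rewrite /Rintegral fineK //; exact: integrable_fin_num. Qed.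

Lemma mart_half (F : set (set T)) (ee Z : T -> H) (s rho : R) (eseq : nat -> H) :
  sigma_algebra setT F -> (forall E, F E -> measurable E) -> L2 P ee -> L2 P Z ->
  @measurable_wrt R H d T F Z ->
  (forall E h, F E -> Rintegral P E (fun w => ip (ee w) h) = 0) ->
  (forall z, exists j, `|z - eseq j| < rho) -> `|s| <= 1 -> 0 < rho ->
  0 <= Rintegral P setT (fun w => s * ip (ee w) (Z w) + rho * `|ee w|).
Proof.
move=> sF Fm hee hZ mZ hw hdense hs rho0.
pose Bj j := Z @^-1` (ball (eseq j) rho).
have FB j : F (Bj j) by apply: mZ; apply: open_borel; exact: ball_open.
pose U j := \bigcup_i (if (i < j)%N then Bj i else set0).
have FU j : F (U j).
  by apply: sGbigcup => // i; case: ifP => _; [exact: FB | exact: sG0].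
pose E j := Bj j `&` ~` U j.
have FE j : F (E j) by apply: sGI => //; apply: sGC.
have mE j : measurable (E j) by exact: Fm.
have cover : \bigcup_j E j = setT.
  apply/seteqP; split => // w _.
  have [j hj] : exists j, Bj j w.
    by have [j hj] := hdense (Z w); exists j; rewrite /Bj /= -ball_normE /= distrC.
  elim/ltn_ind: j hj => j ih hj.
  have [[i [lij Bi]]|none] := pselect (exists i, (i < j)%N /\ Bj i w).
    exact: ih Bi.
  exists j => //; split => // -[i _] /=; case: ifPn => lij // Bi.
  by apply: none; exists i.
have triv : trivIset setT E.
  move=> i j _ _ [w [[Bi Ui] [Bj' Uj]]].
  apply/eqP; rewrite eq_le; apply/negP => /negP.
  rewrite negb_and -!ltnNge => /orP[lt|lt].
  - by apply: Ui; exists j => //; rewrite lt.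
  - by apply: Uj; exists i => //; rewrite lt.
pose g w := s * ip (ee w) (Z w) + rho * `|ee w|.
have ig : intg P g.
  by apply: int_add; apply: int_scale; [exact: int_ip | exact: int_norm].
have key : (0 <= \int[P]_(w in setT) (g w)%:E)%E.
  rewrite -cover (integral_bigcup triv mE); last by rewrite cover.
  apply: nneseries_ge0 => j _ _.
  have iEj : P.-integrable (E j) (EFin \o g) :=
    integrableS measurableT (mE j) (@subsetT _ _) ig.
  have iEh0 : P.-integrable (E j) (EFin \o (fun w => ip (ee w) (eseq j))).
    apply: integrableS measurableT (mE j) (@subsetT _ _) _.
    exact: (int_ip hip hsep hee (L2_cst P (eseq j))).
  have iEh : P.-integrable (E j) (EFin \o (fun w => s * ip (ee w) (eseq j))).
    apply: integrableS measurableT (mE j) (@subsetT _ _) _.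
    apply: int_scale; exact: (int_ip hip hsep hee (L2_cst P (eseq j))).
  apply: le_trans (_ : (\int[P]_(w in E j) (s * ip (ee w) (eseq j))%:E <= _)%E).
    by rewrite (Rint_fin (mE j) iEh) RintegralZl // (hw _ _ (FE j)) mulr0 lee_fin.
  apply: le_integral => // w; rewrite inE => -[Bw _]; rewrite lee_fin /g.
  move: Bw; rewrite /Bj /= -ball_normE /= distrC => Bw.
  have h1 := cs hip (ee w) (Z w - eseq j); rewrite (ipBr hip) in h1.
  set a := ip (ee w) (Z w) - ip (ee w) (eseq j) in h1.
  have ha : - `|a| <= a <= `|a| by rewrite -ler_norml.
  have hs' : -1 <= s <= 1 by rewrite -ler_norml.
  have hN := normr_ge0 (ee w).
  have p1 : 0 <= (1 + s) * (`|a| + a) by apply: mulr_ge0; lra.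
  have p2 : 0 <= (1 - s) * (`|a| - a) by apply: mulr_ge0; lra.
  have p3 : 0 <= `|ee w| * (rho - `|Z w - eseq j|) by apply: mulr_ge0; lra.
  rewrite /a in p1 p2 ha. nra.
by rewrite /Rintegral; apply: fine_ge0.
Qed.


Lemma mart (F : set (set T)) (ee Z : T -> H) :
  sigma_algebra setT F -> (forall E, F E -> measurable E) -> L2 P ee -> L2 P Z ->
  @measurable_wrt R H d T F Z ->
  (forall E h, F E -> Rintegral P E (fun w => ip (ee w) h) = 0) ->
  Rintegral P setT (fun w => ip (ee w) (Z w)) = 0.
Proof.
move=> sF Fm hee hZ mZ hw.
have [eseq he] := enum_dense hsep.
set I := Rintegral P setT _.
set M := Rintegral P setT (fun w => `|ee w|).
have M0 : 0 <= M by apply: Rintegral_ge0.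
have iip := int_ip hip hsep hee hZ.
have inr := int_norm hee.
have bnd rho : 0 < rho -> `|I| <= rho * M.
  move=> rho0.
  have h1 : `|(1 : R)| <= 1 by rewrite normr1.
  have hp := mart_half (s:=1) sF Fm hee hZ mZ hw (fun z => he z rho rho0) h1 rho0.
  have hm : `|(-1 : R)| <= 1 by rewrite normrN normr1.
  have hn := mart_half (s:=-1) sF Fm hee hZ mZ hw (fun z => he z rho rho0) hm rho0.
  rewrite RintegralD // ?RintegralZl // in hp; try by apply: int_scale.
  rewrite RintegralD // ?RintegralZl // in hn; try by apply: int_scale.
  rewrite -/I -/M in hp hn; rewrite ler_norml; apply/andP; split; lra.
apply/eqP; apply/negP => /negP hI.
have hI0 : 0 < `|I| by rewrite normr_gt0.
have rp : 0 < `|I| / (2 * (M + 1)) by apply: divr_gt0 => //; lra.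
have h2 := bnd _ rp.
have e : `|I| / (2 * (M + 1)) * M = `|I| / 2 * (M / (M + 1)) by field; lra.
rewrite e in h2.
have h1 : M / (M + 1) <= 1 by rewrite ler_pdivrMr; lra.
have h3 : `|I| / 2 * (M / (M + 1)) <= `|I| / 2 * 1.
  by apply: ler_wpM2l => //; lra.
lra.
Qed.

End Mart.

Section Analysis.
Context {R : realType}.

Lemma ln_step (m : R) : 1 <= m -> 1 / (m + 1) <= ln (m + 1) - ln m.
Proof.
move=> m1.
have hx : -1 < - (1 / (m + 1)).
  rewrite ltrN2 ltr_pdivrMr; lra.
have h := @le_ln1Dx R _ hx.
have e : 1 + - (1 / (m + 1)) = m / (m + 1) by field; lra.
have m0 : 0 < m by lra.
have m10 : 0 < m + 1 by lra.
rewrite e ln_div ?posrE // in h.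
lra.
Qed.

Lemma ln_sqrt_bound (y : R) : 0 < y -> ln y < 2 * Num.sqrt y.
Proof.
move=> y0.
have s0 : 0 < Num.sqrt y by rewrite sqrtr_gt0.
have e : y = Num.sqrt y ^+ 2 by rewrite sqr_sqrtr // ltW.
rewrite [X in ln X]e lnXn // mulr2n.
have := ln_sublinear s0; lra.
Qed.

Fixpoint cmx (h : nat -> R) (k : nat) : R :=
  if k is k'.+1 then Num.max (cmx h k') (h k) else h 0%N.

Lemma cmx_ge h k i : (i <= k)%N -> h i <= cmx h k.
Proof.
elim: k => [|k ih]; first by rewrite leqn0 => /eqP ->.
rewrite leq_eqVlt => /orP[/eqP ->|]; first by rewrite /= le_max lexx orbT.
by rewrite ltnS => /ih h1; rewrite /= le_max h1.
Qed.


Lemma seq_bound (Phi : nat -> R) (K Cc : R) : 0 <= K -> 0 <= Cc ->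
  (forall n, 0 <= Phi n) ->
  (forall n, (1 + 1 / n.+1%:R - K / n.+1%:R ^+ 2) * Phi n.+1 <=
             Phi n + Cc / n.+1%:R ^+ 2) ->
  exists C, forall n, (0 < n)%N -> Phi n <= C * (ln n.+1%:R / n.+1%:R).
Proof.
move=> K0 Cc0 Phi0 rec.
pose N := (Num.truncn (64 * K ^+ 2 + K + 1)).+1.
have hN : 64 * K ^+ 2 + K + 1 < N%:R by rewrite /N truncnS_gt.
pose h i := Phi i * i.+1%:R / ln i.+1%:R.
pose C := Num.max (4 * Cc) (cmx h N).
have hC1 : 4 * Cc <= C by rewrite le_max lexx.
have hC2 i : (i <= N)%N -> h i <= C.
  by move=> iN; rewrite le_max (cmx_ge h iN) orbT.
have C0 : 0 <= C by lra.
have lnpos i : (0 < i)%N -> 0 < ln (i.+1%:R : R).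
  move=> i0; apply: ln_gt0; by rewrite ltr1n ltnS.
have low i : (0 < i)%N -> (i <= N)%N -> Phi i <= C * (ln i.+1%:R / i.+1%:R).
  move=> i0 iN; have l0 := lnpos i i0.
  have -> : Phi i = h i * (ln i.+1%:R / i.+1%:R).
    rewrite /h; field; rewrite gt_eqF // gt_eqF //; exact: ltr_pwDl.
  apply: ler_wpM2r; last exact: hC2.
  by apply: divr_ge0; [exact: ltW | exact: ler0n].
exists C => n n0.
case: (leqP n N) => [le|lt]; first exact: low.
have -> : n = (N + (n - N))%N by rewrite subnKC // ltnW.
elim: (n - N)%N => [|k ih]; first by rewrite addn0; apply: low.
rewrite addnS.
set nn := (N + k)%N in ih *.
set m : R := nn.+1%:R.
have hm : N%:R + 1 <= m.
  by rewrite /m -addn1 natrD lerD2r ler_nat /nn leq_addr.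
have m1 : 1 <= m by have := ler0n R N; lra.
have e2 : nn.+2%:R = m + 1 :> R by rewrite /m -addn1 natrD.
rewrite e2.
have hr := rec nn; rewrite -/m in hr.
set f := 1 + 1 / m - K / m ^+ 2 in hr.
have Km : K < m by have := sqr_ge0 K; lra.
have f0 : 0 < f.
  rewrite /f; have q1 : K / m ^+ 2 <= K / m.
    have e : K / m ^+ 2 = (K / m) * m^-1 by rewrite expr2 invfM mulrA.
    rewrite e; have u1 : m^-1 <= 1 by rewrite invf_le1 //; lra.
    have u0 : 0 <= K / m by apply: divr_ge0; lra.
    have u2 : 0 <= 1 - m^-1 by rewrite subr_ge0.
    have u3 := mulr_ge0 u0 u2.
    move: u3; set u := m^-1; set v := K / m; move=> u3.
    have -> : v * u = v - v * (1 - u) by ring.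
    lra.
  have q2 : K / m < 1 by rewrite ltr_pdivrMr; lra.
  have q3 : 0 < 1 / m by apply: divr_gt0; lra.
  move: q1 q2 q3; set a1 := K / m ^+ 2; set a2 := K / m; set a3 := 1 / m.
  move=> q1 q2 q3; lra.
set L0 := ln m in ih *.
set L1 := ln (m + 1).
have hL := ln_step m1; rewrite -/L0 -/L1 in hL.
have L0p : 0 <= L0 by apply: ln_ge0.
have s0 : 0 <= Num.sqrt (m + 1) by exact: sqrtr_ge0.
have ss : Num.sqrt (m + 1) ^+ 2 = m + 1 by rewrite sqr_sqrtr //; lra.
have s8 : 8 * K <= Num.sqrt (m + 1).
  have : (8 * K) ^+ 2 <= Num.sqrt (m + 1) ^+ 2 by rewrite ss; nra.
  rewrite lerXn2r ?nnegrE //; nra.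
have hL1 : L1 < 2 * Num.sqrt (m + 1) by apply: ln_sqrt_bound; lra.
have KL : K * L1 <= m / 2.
  have : K * L1 <= K * (2 * Num.sqrt (m + 1)) by apply: ler_wpM2l => //; exact: ltW.
  have : 0 <= Num.sqrt (m + 1) * (Num.sqrt (m + 1) - 8 * K) by apply: mulr_ge0; lra.
  nra.
have key : Cc * (m + 1) + K * C * L1 <= C * m * (m + 1) * (L1 - L0).
  have h1 : 1 <= (m + 1) * (L1 - L0).
    by move: hL; rewrite ler_pdivrMr; [rewrite mulrC | lra].
  have h2 : C * m <= C * m * ((m + 1) * (L1 - L0)).
    by rewrite -{1}[C * m]mulr1; apply: ler_wpM2l => //; apply: mulr_ge0; lra.
  have h3 : K * C * L1 <= C * (m / 2).
    by rewrite mulrAC mulrC; apply: ler_wpM2l.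
  have h4 : Cc * (m + 1) <= C * (m / 2) by nra.
  rewrite !mulrA in h2; nra.
have targ : C * (L0 / m) + Cc / m ^+ 2 <= f * (C * (L1 / (m + 1))).
  rewrite -subr_ge0.
  have -> : f * (C * (L1 / (m + 1))) - (C * (L0 / m) + Cc / m ^+ 2) =
    (C * m * (m + 1) * (L1 - L0) - (Cc * (m + 1) + K * C * L1)) / (m ^+ 2 * (m + 1)).
    by rewrite /f; field; apply/andP; split; rewrite gt_eqF //; lra.
  apply: divr_ge0; first lra.
  apply: mulr_ge0; [exact: sqr_ge0 | lra].
have h5 : f * Phi nn.+1 <= C * (L0 / m) + Cc / m ^+ 2.
  by apply: le_trans hr _; rewrite lerD2r.
have h6 := le_trans h5 targ.
by rewrite ler_pM2l // in h6.
Qed.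

End Analysis.

Section Main.
Variables (R : realType) (H : completeNormedModType R)
  (ip : H -> H -> R) (d : measure_display) (Omega : measurableType d)
  (P : probability Omega R) (A : H -> set H) (B : H -> H) (mu nu c : R)
  (x : nat -> Omega -> H) (xm1 : Omega -> H) (r : nat -> Omega -> H)
  (xbar : H).
Hypotheses (hip : is_inner_product ip) (hsep : @separable_space R H)
  (hnu : 0 < nu) (hsm : strongly_monotone ip A nu)
  (hBm : monotone_fun ip B) (hmu : 0 < mu) (hBL : lipschitz_with B mu)
  (hxbar : A xbar (- B xbar))
  (hx0 : square_integrable P (x 0%N)) (hxm1 : square_integrable P xm1)
  (hr : forall n, random_var (r n))
  (hce : forall n, cond_exp_eq ip P (filtration x n) (r n)
                         (fun w => B (refl_point x xm1 n w)))
  (hcl : forall n, cond_exp_le P (filtration x n)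
                         (fun w => `|r n w - B (refl_point x xm1 n w)| ^+ 2) c)
  (hres : forall n w, resolvent_rel A (step_size nu n)
                 (x n w - step_size nu n *: r n w) (x n.+1 w)).

Let gam n := step_size nu n.
Lemma gam_gt0 n : 0 < gam n.
Proof. by rewrite /gam /step_size invr_gt0 !mulr_gt0. Qed.

Lemma res_nonexp g z z' p p' : 0 < g -> resolvent_rel A g z p ->
  resolvent_rel A g z' p' -> `|p - p'| <= `|z - z'|.
Proof.
move=> g0 [u [Au ->]] [u' [Au' ->]].
have h1 := hsm Au Au'.
have h2 : 0 <= ip (p - p') (u - u').
  apply: le_trans h1; apply: mulr_ge0; [exact: ltW | exact: sqr_ge0].
have e : p + g *: u - (p' + g *: u') = (p - p') + g *: (u - u').
  by rewrite opprD addrACA scalerBr.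
have h3 : ip (p - p') (p + g *: u - (p' + g *: u')) = `|p - p'| ^+ 2 + g * ip (p - p') (u - u').
  by rewrite e (ipDr hip) (ipZr hip) (ipxx hip).
have h5 : `|p - p'| ^+ 2 <= `|p - p'| * `|p + g *: u - (p' + g *: u')|.
  have : 0 <= g * ip (p - p') (u - u') by apply: mulr_ge0 => //; exact: ltW.
  have := ler_norm (ip (p - p') (p + g *: u - (p' + g *: u'))).
  have := cs hip (p - p') (p + g *: u - (p' + g *: u')).
  lra.
have := normr_ge0 (p - p'); have := normr_ge0 (p + g *: u - (p' + g *: u')).
nra.
Qed.


Lemma rvx n : random_var (x n).
Proof.
elim: n => [|n ih]; first by case: hx0.
apply: (@rv_lip _ _ _ _ _ (fun w => 1 *: x n w + (- gam n) *: r n w)).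
  exact: rv_comb.
move=> w w'; rewrite !scale1r !scaleNr.
exact: res_nonexp (gam_gt0 n) (hres n w) (hres n w').
Qed.

Lemma filt_meas n E : filtration x n E -> measurable E.
Proof.
move=> hE; apply: (smallest_sub (@sigma_algebra_measurable _ Omega)) hE.
by move=> _ [k [Bs [_ [hB ->]]]]; exact: rvx.
Qed.

Lemma filt_sigma n : sigma_algebra setT (filtration x n).
Proof. exact: smallest_sigma_algebra. Qed.

Lemma filtT n : filtration x n setT.
Proof.
case: (filt_sigma n) => h0 hC _.
by have := hC _ h0; rewrite setD0.
Qed.

Lemma filt_x n : measurable_wrt (filtration x n) (x n).
Proof. by move=> Bs hB; apply: sub_sigma_algebra; exists n, Bs. Qed.

Lemma wrt_rv n (f : Omega -> H) : measurable_wrt (filtration x n) f -> random_var f.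
Proof. by move=> h Bs hB; apply: (filt_meas (n := n)); exact: h. Qed.

Let y n w := refl_point x xm1 n w.
Let e n w := r n w - B (y n w).

Lemma rvBy n : random_var (fun w => B (y n w)).
Proof. by case: (hce n) => _ _ h _ _; exact: wrt_rv h. Qed.

Lemma rvxm1 : random_var xm1. Proof. by case: hxm1. Qed.

Lemma rve n : random_var (e n).
Proof.
have := rv_comb 1 (-1) hsep (hr n) (rvBy n).
by under eq_fun do rewrite scale1r scaleN1r.
Qed.


Let xp n w := if n is k.+1 then x k w else xm1 w.

Lemma y_eq n w : y n w = 2 *: x n w + (-1) *: xp n w.
Proof. by rewrite /y /refl_point scaleN1r; case: n. Qed.

Lemma int_e2 n : intg P (fun w => `|e n w| ^+ 2).
Proof.
apply/integrableP; split.
  by apply/measurable_realfun.measurable_EFinP; apply: msq; exact: rve.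
have := @hcl n setT (@filtT n); rewrite probability_setT mule1 => h.
apply: le_lt_trans (ltry c).
apply: le_trans h; rewrite le_eqVlt; apply/orP; left; apply/eqP.
apply: eq_integral => w _ /=; rewrite ger0_norm ?sqr_ge0//.
Qed.

Lemma L2c (f g : Omega -> H) a b : L2 P f -> L2 P g -> L2 P (fun w => a *: f w + b *: g w).
Proof. exact: (@L2_comb R H ip d Omega P hip hsep f g a b). Qed.

Lemma L2_step n : L2 P (x n) -> L2 P (xp n) ->
  [/\ L2 P (fun w => B (y n w)), L2 P (e n) & L2 P (r n)].
Proof.
move=> hx hxp.
have hy : L2 P (y n).
  have -> : y n = (fun w => 2 *: x n w + (-1) *: xp n w).
    by apply/funext => w; exact: y_eq.
  exact: L2c.
have hyb : L2 P (fun w => mu *: y n w + (- mu) *: xbar) by apply: L2c => //; exact: L2_cst.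
have hBy : L2 P (fun w => B (y n w)).
  apply: (L2_dom2 (rvBy n) (L2_cst P (B xbar)) hyb) => w.
  rewrite scaleNr -scalerBr normrZ gtr0_norm //.
  have := hBL (y n w) xbar.
  have := ler_normD (B xbar) (B (y n w) - B xbar).
  rewrite addrC subrK; lra.
have he : L2 P (e n) by split; [exact: rve | exact: int_e2].
split => //.
have -> : r n = (fun w => 1 *: e n w + 1 *: B (y n w)).
  by apply/funext => w; rewrite !scale1r /e subrK.
exact: L2c.
Qed.


Let zbar n := xbar - gam n *: B xbar.

Lemma res_xbar n : resolvent_rel A (gam n) (zbar n) xbar.
Proof. by exists (- B xbar); split => //; rewrite scalerN. Qed.

Lemma xn_est n w : `|x n.+1 w - xbar| <= `|(x n w - gam n *: r n w) - zbar n|.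
Proof. exact: res_nonexp (gam_gt0 n) (hres n w) (res_xbar n). Qed.

Lemma sqint_L2 (f : Omega -> H) : square_integrable P f -> L2 P f.
Proof.
case=> rf hi; split => //; apply/integrableP; split.
  by apply/measurable_realfun.measurable_EFinP; exact: msq.
apply: le_lt_trans hi; rewrite le_eqVlt; apply/orP; left; apply/eqP.
by apply: eq_integral => w _ /=; rewrite ger0_norm ?sqr_ge0.
Qed.

Lemma L2_all n : L2 P (x n) /\ L2 P (xp n).
Proof.
elim: n => [|n [hx hxp]]; first by split; apply: sqint_L2.
split => //.
have [_ _ hrn] := L2_step hx hxp.
have hz : L2 P (fun w => 1 *: (1 *: x n w + (- gam n) *: r n w) + (-1) *: zbar n).
  by apply: L2c; [apply: L2c | exact: L2_cst].
apply: (L2_dom2 (rvx n.+1) (L2_cst P xbar) hz) => w.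
rewrite !scale1r scaleN1r scaleNr.
have := xn_est n w; have := ler_normD xbar (x n.+1 w - xbar).
rewrite addrC subrK; lra.
Qed.

Lemma L2x n : L2 P (x n). Proof. by case: (L2_all n). Qed.
Lemma L2xp n : L2 P (xp n). Proof. by case: (L2_all n). Qed.
Lemma L2e n : L2 P (e n). Proof. by have [] := L2_step (L2x n) (L2xp n). Qed.
Lemma L2By n : L2 P (fun w => B (y n w)). Proof. by have [] := L2_step (L2x n) (L2xp n). Qed.
Lemma L2r n : L2 P (r n). Proof. by have [] := L2_step (L2x n) (L2xp n). Qed.


Lemma lyap n w :
  (1 + 2 * gam n * nu - 16 * gam n ^+ 2 * mu ^+ 2) * `|x n.+1 w - xbar| ^+ 2
  + 5 / 8 * `|x n.+1 w - x n w| ^+ 2 <=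
  `|x n w - xbar| ^+ 2 + 1 / 8 * `|x n w - xp n w| ^+ 2
  + 4 * gam n ^+ 2 * `|e n w| ^+ 2 - 2 * gam n * ip (e n w) (x n w - xbar).
Proof.
have g0 := gam_gt0 n.
have [u [Au hz]] := hres n w.
rewrite -/(gam n) in hz.
set p := x n.+1 w in Au hz *; set xx := x n w in hz *; set q := xp n w.
set rr := r n w in hz.
set g := gam n in g0 hz *.
have ee : e n w = rr - B (y n w) by [].
have yv : y n w = 2 *: xx + (-1) *: q by exact: y_eq.
set yy := y n w in ee yv.
have G1 := hsm Au hxbar.
rewrite opprK (ipDr hip) in G1.
have G1' : g * (nu * `|p - xbar| ^+ 2) <= g * ip (p - xbar) u + g * ip (p - xbar) (B xbar).
  by rewrite -mulrDr; apply: ler_wpM2l => //; exact: ltW.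
have G2 : g * ip (p - xbar) u = ip (p - xbar) (xx - p) - g * ip (p - xbar) rr.
  have -> : xx - p = g *: u + g *: rr.
    by rewrite -[xx](subrK (g *: rr)) hz addrAC [p + _]addrC addrK.
  rewrite (ipDr hip) !(ipZr hip); ring.
have G3 : 2 * ip (p - xbar) (xx - p) = `|xx - xbar| ^+ 2 - `|p - xbar| ^+ 2 - `|p - xx| ^+ 2.
  have -> : xx - xbar = (xx - p) + (p - xbar) by rewrite addrA subrK.
  rewrite (sqnD hip) -(normrN (p - xx)) opprB (ipC hip); ring.
have G4 : ip (p - xbar) rr = ip (p - xbar) (e n w) + ip (p - xbar) (B yy).
  by rewrite -(ipDr hip) ee subrK.
have G5 := hBm p xbar.
have G5' : ip (p - xbar) (B yy) - ip (p - xbar) (B xbar) >= - ip (p - xbar) (B p - B yy).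
  rewrite !(ipBr hip) in G5 *; lra.
have t0 : 0 < 16 * g ^+ 2 * mu ^+ 2 by rewrite !mulr_gt0 // exprn_gt0.
have G6 := young hip (p - xbar) (g *: (B p - B yy)) t0.
rewrite (ipZr hip) normrZ (gtr0_norm g0) in G6.
have G6' : (g * `|B p - B yy|) ^+ 2 / (16 * g ^+ 2 * mu ^+ 2) = `|B p - B yy| ^+ 2 / (16 * mu ^+ 2).
  by field; rewrite ?gt_eqF // ?exprn_gt0.
rewrite G6' in G6.
have G7 : `|B p - B yy| ^+ 2 <= mu ^+ 2 * (2 * `|p - xx| ^+ 2 + 2 * `|xx - q| ^+ 2).
  have h1 := hBL p yy.
  have h2 : p - yy = (p - xx) + (- (xx - q)).
    by rewrite yv scaleN1r scaler_nat mulr2n !opprB opprD (addrA p) addrACA.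
  have h3 := sqn_le2 hip (p - xx) (- (xx - q)); rewrite -h2 normrN in h3.
  have h4 : `|B p - B yy| ^+ 2 <= (mu * `|p - yy|) ^+ 2.
    have m0 : 0 <= mu * `|p - yy| by apply: mulr_ge0 => //; exact: ltW.
    by rewrite lerXn2r ?nnegrE.
  apply: le_trans h4 _; rewrite exprMn; apply: ler_wpM2l; [exact: sqr_ge0 | exact: h3].
have G7' : `|B p - B yy| ^+ 2 / (16 * mu ^+ 2) <= (`|p - xx| ^+ 2 + `|xx - q| ^+ 2) / 8.
  have m16 : 0 < 16 * mu ^+ 2 by apply: mulr_gt0; [lra | exact: exprn_gt0].
  rewrite ler_pdivrMr //.
  apply: le_trans G7 _; rewrite le_eqVlt; apply/orP; left; apply/eqP.
  by field.
have t1 : (0 : R) < 1 / 4 by lra.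
have G8 := young hip (p - xx) (- g *: e n w) t1.
rewrite (ipZr hip) normrZ normrN (gtr0_norm g0) in G8.
have G8' : (g * `|e n w|) ^+ 2 / (1 / 4) = 4 * g ^+ 2 * `|e n w| ^+ 2 by field.
rewrite G8' in G8.
have G9 : ip (p - xbar) (e n w) = ip (p - xx) (e n w) + ip (e n w) (xx - xbar).
  by rewrite (ipC hip (e n w)) -(ipDl hip) addrA subrK.
have G10 : g * ip (p - xbar) (B p - B yy) = ip (p - xbar) (g *: (B p - B yy)) by rewrite (ipZr hip).
rewrite (ipZr hip) in G10.
have gG5 : g * (ip (p - xbar) (B yy) - ip (p - xbar) (B xbar)) >= g * (- ip (p - xbar) (B p - B yy)).
  by apply: ler_wpM2l => //; exact: ltW.
rewrite mulrN mulrBr in gG5.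
have gG4 : g * ip (p - xbar) rr = g * ip (p - xbar) (e n w) + g * ip (p - xbar) (B yy).
  by rewrite G4 mulrDr.
have gG9 : g * ip (p - xbar) (e n w) = g * ip (p - xx) (e n w) + g * ip (e n w) (xx - xbar).
  by rewrite G9 mulrDr.
have eG1 : g * (nu * `|p - xbar| ^+ 2) = g * nu * `|p - xbar| ^+ 2 by rewrite mulrA.
rewrite eG1 in G1'.
have e8 : 16 * g ^+ 2 * mu ^+ 2 * `|p - xbar| ^+ 2 = 16 * g ^+ 2 * mu ^+ 2 * `|p - xbar| ^+ 2 by [].
lra.
Qed.


Lemma L2sub (f g : Omega -> H) : L2 P f -> L2 P g -> L2 P (fun w => f w - g w).
Proof.
move=> hf hg; have := L2c 1 (-1) hf hg.
by under eq_fun do rewrite scale1r scaleN1r.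
Qed.

Lemma rvsub (f g : Omega -> H) : random_var f -> random_var g -> random_var (fun w => f w - g w).
Proof.
move=> hf hg; have := rv_comb 1 (-1) hsep hf hg.
by under eq_fun do rewrite scale1r scaleN1r.
Qed.

Lemma weak0 n E h : filtration x n E -> Rintegral P E (fun w => ip (e n w) h) = 0.
Proof.
move=> hE; have mE := filt_meas hE.
case: (hce n) => _ _ _ _ heq.
have := heq h E hE => {}heq.
have i1 : P.-integrable E (EFin \o (fun w => ip (r n w) h)).
  apply: integrableS measurableT mE (@subsetT _ _) _.
  exact: (int_ip hip hsep (L2r n) (L2_cst P h)).
have i2 : P.-integrable E (EFin \o (fun w => ip (B (y n w)) h)).
  apply: integrableS measurableT mE (@subsetT _ _) _.
  exact: (int_ip hip hsep (L2By n) (L2_cst P h)).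
under eq_Rintegral do rewrite /e (ipBl hip).
rewrite RintegralB // /Rintegral.
have -> : (\int[P]_(w in E) (ip (r n w) h)%:E)%E = (\int[P]_(w in E) (ip (B (y n w)) h)%:E)%E.
  exact: heq.
by rewrite subrr.
Qed.

Lemma mart_n n : Rintegral P setT (fun w => ip (e n w) (x n w - xbar)) = 0.
Proof.
apply: (mart hip hsep (F := filtration x n)).
- exact: filt_sigma.
- by move=> E; exact: filt_meas.
- exact: L2e.
- by apply: L2sub; [exact: L2x | exact: L2_cst].
- apply: wrt_open; first exact: filt_sigma.
  move=> U oU.
  have -> : (fun w => x n w - xbar) @^-1` U = x n @^-1` [set v | U (v - xbar)] by [].
  apply: filt_x; apply: open_borel.
  have -> : [set v | U (v - xbar)] = (fun v => v - xbar) @^-1` U by [].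
  apply: open_comp => // v _.
  by apply: continuousB => //; exact: cst_continuous.
- by move=> E h hE; exact: weak0.
Qed.


Let aa k := Rintegral P setT (fun w => `|x k w - xbar| ^+ 2).
Let DD k := Rintegral P setT (fun w => `|x k w - xp k w| ^+ 2).

Lemma iA k : intg P (fun w => `|x k w - xbar| ^+ 2).
Proof. by apply: int_sq; apply: L2sub; [exact: L2x | exact: L2_cst]. Qed.
Lemma iD k : intg P (fun w => `|x k w - xp k w| ^+ 2).
Proof. by apply: int_sq; apply: L2sub; [exact: L2x | exact: L2xp]. Qed.
Lemma iM n : intg P (fun w => ip (e n w) (x n w - xbar)).
Proof.
apply: (int_ip hip hsep (L2e n)).
by apply: L2sub; [exact: L2x | exact: L2_cst].
Qed.

Lemma ee_le n : Rintegral P setT (fun w => `|e n w| ^+ 2) <= c.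
Proof.
have := @hcl n setT (@filtT n); rewrite probability_setT mule1.
by rewrite (Rint_fin measurableT (int_e2 n)) lee_fin.
Qed.

Lemma recur n :
  (1 + 2 * gam n * nu - 16 * gam n ^+ 2 * mu ^+ 2) * aa n.+1 + 5 / 8 * DD n.+1 <=
  aa n + 1 / 8 * DD n + 4 * gam n ^+ 2 * c.
Proof.
set k1 := 1 + 2 * gam n * nu - 16 * gam n ^+ 2 * mu ^+ 2.
have iL : intg P (fun w => k1 * `|x n.+1 w - xbar| ^+ 2 + 5 / 8 * `|x n.+1 w - x n w| ^+ 2).
  by apply: int_add; apply: int_scale; [exact: iA | exact: (iD n.+1)].
have iR : intg P (fun w => `|x n w - xbar| ^+ 2 + 1 / 8 * `|x n w - xp n w| ^+ 2
  + 4 * gam n ^+ 2 * `|e n w| ^+ 2 - 2 * gam n * ip (e n w) (x n w - xbar)).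
  apply: int_sub; last by apply: int_scale; exact: iM.
  apply: int_add; last by apply: int_scale; exact: int_e2.
  by apply: int_add; [exact: iA | apply: int_scale; exact: iD].
have := le_Rintegral measurableT iL iR (fun w _ => lyap n w).
rewrite RintegralD //; try by apply: int_scale; first [exact: iA | exact: (iD n.+1)].
rewrite RintegralB //; try by apply: int_scale; exact: iM.
2: by apply: int_add; [apply: int_add; [exact: iA | apply: int_scale; exact: iD] | apply: int_scale; exact: int_e2].
rewrite RintegralD //; try by apply: int_scale; exact: int_e2.
2: by apply: int_add; [exact: iA | apply: int_scale; exact: iD].
rewrite RintegralD //; try by apply: int_scale; exact: iD.
2: exact: iA.
rewrite !RintegralZl //; try exact: iA; try exact: iD; try exact: int_e2; try exact: iM; try exact: (iD n.+1).
rewrite mart_n mulr0 subr0 -/(aa n) -/(aa n.+1) -/(DD n) -/(DD n.+1) => h.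
apply: le_trans h _.
have := ee_le n; have := sqr_ge0 (gam n).
set E2 := Rintegral _ _ _. nra.
Qed.


Lemma final : exists C, forall n, (0 < n)%N ->
  (\int[P]_w ((`|x n w - xbar| ^+ 2)%:E) <= (C * (ln (n.+1%:R) / n.+1%:R))%:E)%E.
Proof.
pose Phi k := aa k + 1 / 8 * DD k.
have aa0 k : 0 <= aa k by apply: Rintegral_ge0 => w _; exact: sqr_ge0.
have DD0 k : 0 <= DD k by apply: Rintegral_ge0 => w _; exact: sqr_ge0.
have c0 : 0 <= c.
  apply: le_trans (ee_le 0); apply: Rintegral_ge0 => w _; exact: sqr_ge0.
have nu2 : 0 < nu ^+ 2 by exact: exprn_gt0.
have K0 : 0 <= 4 * mu ^+ 2 / nu ^+ 2.
  by apply: divr_ge0; [apply: mulr_ge0; [lra | exact: sqr_ge0] | exact: ltW].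
have Cc0 : 0 <= c / nu ^+ 2 by apply: divr_ge0 => //; exact: ltW.
have Phi0 k : 0 <= Phi k by rewrite /Phi; have := aa0 k; have := DD0 k; lra.
have rec n : (1 + 1 / n.+1%:R - (4 * mu ^+ 2 / nu ^+ 2) / n.+1%:R ^+ 2) * Phi n.+1 <=
             Phi n + (c / nu ^+ 2) / n.+1%:R ^+ 2.
  have hrec := recur n.
  set m : R := n.+1%:R in hrec *.
  have m1 : 1 <= m by rewrite /m ler1n.
  have e1 : 2 * gam n * nu = 1 / m.
    by rewrite /gam /step_size -/m; field; apply/andP; split; rewrite gt_eqF //; lra.
  have e2 : 16 * gam n ^+ 2 * mu ^+ 2 = (4 * mu ^+ 2 / nu ^+ 2) / m ^+ 2.
    by rewrite /gam /step_size -/m; field; apply/andP; split; rewrite gt_eqF //; lra.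
  have e3 : 4 * gam n ^+ 2 * c = (c / nu ^+ 2) / m ^+ 2.
    by rewrite /gam /step_size -/m; field; apply/andP; split; rewrite gt_eqF //; lra.
  rewrite e1 e2 e3 in hrec.
  set f := 1 + 1 / m - _ / m ^+ 2 in hrec *.
  have f5 : f <= 5.
    rewrite /f; have q1 : 1 / m <= 1 by rewrite ler_pdivrMr; lra.
    have q2 : 0 <= 4 * mu ^+ 2 / nu ^+ 2 / m ^+ 2.
      by apply: divr_ge0 => //; exact: sqr_ge0.
    move: q1 q2; set a1 := 1 / m; set a2 := _ / m ^+ 2; move=> q1 q2; lra.
  apply: le_trans hrec; rewrite /Phi mulrDr.
  have := DD0 n.+1.
  have -> : f * (1 / 8 * DD n.+1) = (f / 8) * DD n.+1 by field.
  move=> hD; have : (f / 8) * DD n.+1 <= 5 / 8 * DD n.+1.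
    by apply: ler_wpM2r => //; lra.
  lra.
have [C hC] := seq_bound K0 Cc0 Phi0 rec.
exists C => n n0.
rewrite (Rint_fin measurableT (iA n)) lee_fin.
apply: le_trans (hC n n0); rewrite /Phi -/(aa n).
have := DD0 n; lra.
Qed.

End Main.

Unset Implicit Arguments.
Set Strict Implicit.
Theorem mainTheorem7 (R : realType) (H : completeNormedModType R)
  (ip : H -> H -> R) (d : measure_display) (Omega : measurableType d)
  (P : probability Omega R) (A : H -> set H) (B : H -> H) (mu nu c : R)
  (x : nat -> Omega -> H) (xm1 : Omega -> H) (r : nat -> Omega -> H)
  (xbar : H) (n0 : nat) :
  is_inner_product ip -> @separable_space R H ->
  maximally_monotone ip A -> 0 < nu -> strongly_monotone ip A nu ->
  monotone_fun ip B -> 0 < mu -> lipschitz_with B mu ->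
  A xbar (- B xbar) ->
  square_integrable P (x 0%N) -> square_integrable P xm1 ->
  (forall n, random_var (r n)) ->
  (forall n, cond_exp_eq ip P (filtration x n) (r n)
                         (fun w => B (refl_point x xm1 n w))) ->
  (forall n, cond_exp_le P (filtration x n)
                         (fun w => `|r n w - B (refl_point x xm1 n w)| ^+ 2) c) ->
  (forall n w, resolvent_rel A (step_size nu n)
                 (x n w - step_size nu n *: r n w) (x n.+1 w)) ->
  4 / nu * mu * (1 + Num.sqrt 2) < n0%:R ->
  (forall m : nat, 4 / nu * mu * (1 + Num.sqrt 2) < m%:R -> (n0 <= m)%N) ->
  exists C : R, forall n : nat, (n0 < n)%N ->
    (\int[P]_w ((`|x n w - xbar| ^+ 2)%:E)
       <= (C * (ln (n.+1%:R) / n.+1%:R))%:E)%E.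
Proof.
move=> hip hsep _ hnu hsm hBm hmu hBL hxbar hx0 hxm1 hr hce hcl hres _ _.
have [C hC] := final hip hsep hnu hsm hBm hmu hBL hxbar hx0 hxm1 hr hce hcl hres.
exists C => n hn; apply: hC.
exact: leq_ltn_trans (leq0n n0) hn.
Qed.
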